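(* Let $F$ be a field, $4\le n<\infty$, and let $\varphi$ be an almost identity PC-map of $\mathrm{UT}(n,F)$. Suppose $g,h,k:\mathrm{UT}(n,F)\to F$ are functions such that $\varphi(b)=b\,t_{2n}(g(b))\,t_{1\,n-1}(h(b))\,t_{1n}(k(b))$ for all $b\in\mathrm{UT}(n,F)$. Then there exist $\alpha,\beta\in F$ such that $g(b)=\alpha b_{23}$ and $h(b)=\beta b_{n-2\,n-1}$ for all $b\in\mathrm{UT}(n,F)$.
   Context: $\mathrm{UT}(n,F)$ is the group of upper unitriangular $n\times n$ matrices over $F$; $b_{ij}$ is the $(i,j)$ entry of $b$; $e$ is the identity, $e_{ij}$ the matrix unit, $t_{ij}(\alpha)=e+\alpha e_{ij}$ ($i<j$). $[x,y]=xyx^{-1}y^{-1}$. A PC-map is a bijection $\varphi$ of the group with $\varphi([x,y])=[\varphi(x),\varphi(y)]$ for all $x,y$; it is almost identity if $\varphi(t_{ij}(\alpha))=t_{ij}(\alpha)$ for all $i<j$, $\alpha\in F$. *)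

(* Defs.v *)
From HB Require Import structures.
From mathcomp Require Import all_boot all_order all_algebra.
Set Implicit Arguments. Unset Strict Implicit. Unset Printing Implicit Defensive.
Import GRing.Theory.
Local Open Scope ring_scope.

(* Paper indices are 1-based: index i (1 <= i <= n) is the ordinal p : 'I_n
   with p.+1 = i. *)

Definition entry (F : fieldType) (n : nat) (b : 'M[F]_n) (i j : nat) : F :=
  match [pick p : 'I_n | p.+1 == i], [pick q : 'I_n | q.+1 == j] with
  | Some p, Some q => b p q
  | _, _ => 0
  end.

Definition tmx (F : fieldType) (n : nat) (i j : nat) (a : F) : 'M[F]_n :=
  \matrix_(p < n, q < n) ((p == q)%:R + (if (p.+1 == i) && (q.+1 == j) then a else 0)).

Definition isUT (F : fieldType) (n : nat) (b : 'M[F]_n) : Prop :=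
  (forall p q : 'I_n, (q < p)%N -> b p q = 0) /\ (forall p : 'I_n, b p p = 1).

Definition commg_mx (F : fieldType) (n : nat) (x y : 'M[F]_n) : 'M[F]_n :=
  x *m y *m invmx x *m invmx y.

Definition PCmap (F : fieldType) (n : nat) (phi : 'M[F]_n -> 'M[F]_n) : Prop :=
  [/\ (forall b, isUT b -> isUT (phi b)),
      (forall b c, isUT b -> isUT c -> phi b = phi c -> b = c),
      (forall c, isUT c -> exists2 b, isUT b & phi b = c)
    & (forall x y, isUT x -> isUT y -> phi (commg_mx x y) = commg_mx (phi x) (phi y))].

Definition almost_identity (F : fieldType) (n : nat) (phi : 'M[F]_n -> 'M[F]_n) : Prop :=
  forall (i j : nat) (a : F), (1 <= i)%N -> (i < j)%N -> (j <= n)%N ->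
    phi (tmx n i j a) = tmx n i j a.

(* Main.v *)
Require Import Defs.
From HB Require Import structures.
From mathcomp Require Import all_boot all_order all_algebra.
From mathcomp Require Import zify ring.
Set Implicit Arguments. Unset Strict Implicit. Unset Printing Implicit Defensive.
Import GRing.Theory.
Local Open Scope ring_scope.

Section S.
Variable F : fieldType.
Variable m : nat.
Local Notation n := m.+4.
Local Notation MX := 'M[F]_n.

Definition E (i j : 'I_n) : MX := delta_mx i j.
Definition T (i j : 'I_n) (c : F) : MX := 1 + c *: E i j.
Definition i0 : 'I_n := @Ordinal n 0 isT.
Definition i1 : 'I_n := @Ordinal n 1 isT.
Definition iM : 'I_n := @Ordinal n m.+2 (leqW (ltnSn _)).
Definition iL : 'I_n := @Ordinal n m.+3 (ltnSn _).
Definition N_def (a b c : F) : MX := a *: E i1 iL + b *: E i0 iM + c *: E i0 iL.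
Fact N_key : unit. Proof. by []. Qed.
Definition N := locked_with N_key N_def.
Lemma NE a b c : N a b c = N_def a b c. Proof. by rewrite /N locked_withE. Qed.

Lemma entD (A B : MX) r s : (A + B) r s = A r s + B r s. Proof. by rewrite mxE. Qed.
Lemma entB (A B : MX) r s : (A - B) r s = A r s - B r s. Proof. by rewrite !mxE. Qed.
Lemma entZ a (A : MX) r s : (a *: A) r s = a * A r s. Proof. by rewrite mxE. Qed.
Lemma entO (A : MX) r s : (- A) r s = - A r s. Proof. by rewrite mxE. Qed.
Lemma ent0 r s : (0 : MX) r s = 0. Proof. by rewrite mxE. Qed.
Lemma entE i j r s : E i j r s = ((r == i) && (s == j))%:R. Proof. by rewrite mxE. Qed.
Lemma ent1 r s : (1 : MX) r s = (r == s)%:R. Proof. by rewrite mxE. Qed.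

Lemma mulE (A : MX) i j r s : (A * E i j) r s = A r i * (s == j)%:R.
Proof.
rewrite -mulmxE mxE (bigD1 i) //= big1 => [|t /negbTE Ht]; rewrite !mxE.
  by rewrite eqxx /= addr0.
by rewrite Ht mulr0.
Qed.

Lemma Emul (A : MX) i j r s : (E i j * A) r s = (r == i)%:R * A j s.
Proof.
rewrite -mulmxE mxE (bigD1 j) //= big1 => [|t /negbTE Ht]; rewrite !mxE.
  by rewrite eqxx andbT addr0.
by rewrite eq_sym Ht andbF mul0r.
Qed.

Lemma EE i j p q : E i j * E p q = (j == p)%:R *: E i q.
Proof.
apply/matrixP => r s; rewrite mulE entZ !entE.
rewrite (eq_sym p j); by case: (r == i); case: (j == p); case: (s == q); rewrite /= ?mulr0 ?mul0r ?mulr1.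
Qed.

Lemma ne01 : (i0 == i1) = false. Proof. by []. Qed.
Lemma ne0M : (i0 == iM) = false. Proof. by []. Qed.
Lemma ne0L : (i0 == iL) = false. Proof. by []. Qed.
Lemma ne1M : (i1 == iM) = false. Proof. by []. Qed.
Lemma ne1L : (i1 == iL) = false. Proof. by []. Qed.
Lemma neML : (iM == iL) = false. Proof. by rewrite -val_eqE /=; lia. Qed.
Lemma ne10 : (i1 == i0) = false. Proof. by []. Qed.
Lemma neM0 : (iM == i0) = false. Proof. by []. Qed.
Lemma neL0 : (iL == i0) = false. Proof. by []. Qed.
Lemma neM1 : (iM == i1) = false. Proof. by []. Qed.
Lemma neL1 : (iL == i1) = false. Proof. by []. Qed.
Lemma neLM : (iL == iM) = false. Proof. by rewrite eq_sym neML. Qed.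
Definition neq := (ne01, ne0M, ne0L, ne1M, ne1L, neML, ne10, neM0, neL0, neM1, neL1, neLM).

Lemma NN a b c a' b' c' : N a b c * N a' b' c' = 0.
Proof.
rewrite !NE /N_def !mulrDl !mulrDr -!scalerAl -!scalerAr !EE.
by rewrite !neq !scale0r !scaler0 !addr0.
Qed.

Lemma N1L a b c : N a b c i1 iL = a.
Proof. by rewrite !NE /N_def !entD !entZ !entE !eqxx !neq /=; ring. Qed.
Lemma N0M a b c : N a b c i0 iM = b.
Proof. by rewrite !NE /N_def !entD !entZ !entE !eqxx !neq /=; ring. Qed.
Lemma N0L a b c : N a b c i0 iL = c.
Proof. by rewrite !NE /N_def !entD !entZ !entE !eqxx !neq /=; ring. Qed.


Lemma col0 (y : MX) r : isUT y -> y r i0 = (r == i0)%:R.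
Proof.
move=> [Hl Hd]; have [->|ne] := eqVneq r i0; first by rewrite Hd.
apply: Hl; move: ne; rewrite -val_eqE /=; lia.
Qed.

Lemma rowL (y : MX) s : isUT y -> y iL s = (iL == s)%:R.
Proof.
move=> [Hl Hd]; have [<-|ne] := eqVneq iL s; first by rewrite Hd.
apply: Hl; move: ne (ltn_ord s); rewrite -val_eqE /=; lia.
Qed.

Lemma col1 (y : MX) r : isUT y -> y r i1 = (r == i1)%:R + y i0 i1 * (r == i0)%:R.
Proof.
move=> [Hl Hd]; have [->|ne] := eqVneq r i1; first by rewrite Hd ne10 mulr0 addr0.
have [->|ne'] := eqVneq r i0; first by rewrite mulr1 add0r.
rewrite mulr0 addr0; apply: Hl; move: ne ne'; rewrite -!val_eqE /=; lia.
Qed.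

Lemma rowM (y : MX) s : isUT y -> y iM s = (iM == s)%:R + y iM iL * (iL == s)%:R.
Proof.
move=> [Hl Hd]; have [<-|ne] := eqVneq iM s; first by rewrite Hd neLM mulr0 addr0.
have [<-|ne'] := eqVneq iL s; first by rewrite mulr1 add0r.
rewrite mulr0 addr0; apply: Hl; move: ne ne' (ltn_ord s); rewrite -!val_eqE /=; lia.
Qed.

Lemma yE0 (y : MX) j : isUT y -> y * E i0 j = E i0 j.
Proof. by move=> Hy; apply/matrixP => r s; rewrite mulE col0 // entE; case: (r == i0); case: (s == j); rewrite /= ?mulr0 ?mulr1. Qed.

Lemma EyL (y : MX) i : isUT y -> E i iL * y = E i iL.
Proof. by move=> Hy; apply/matrixP => r s; rewrite Emul rowL // entE (eq_sym iL); case: (r == i); case: (s == iL); rewrite /= ?mulr0 ?mulr1 ?mul0r. Qed.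

Lemma yE1 (y : MX) j : isUT y -> y * E i1 j = E i1 j + y i0 i1 *: E i0 j.
Proof.
move=> Hy; apply/matrixP => r s; rewrite mulE col1 // entD entZ !entE.
by case: (r == i1); case: (r == i0); case: (s == j); rewrite /= ?mulr0 ?mulr1 ?mul0r ?addr0 ?add0r.
Qed.

Lemma EyM (y : MX) i : isUT y -> E i iM * y = E i iM + y iM iL *: E i iL.
Proof.
move=> Hy; apply/matrixP => r s; rewrite Emul rowM // entD entZ !entE (eq_sym iM s) (eq_sym iL s).
by case: (r == i); case: (s == iM); case: (s == iL); rewrite /=; ring.
Qed.

Lemma UT_mulN (y : MX) a b c : isUT y -> y * N a b c = N a b (c + a * y i0 i1).
Proof.
move=> Hy; rewrite !NE /N_def !mulrDr -!scalerAr yE1 // !yE0 //.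
by apply/matrixP => r s; rewrite !(entD, entZ); ring.
Qed.

Lemma UT_Nmul (y : MX) a b c : isUT y -> N a b c * y = N a b (c + b * y iM iL).
Proof.
move=> Hy; rewrite !NE /N_def !mulrDl -!scalerAl EyM // !EyL //.
by apply/matrixP => r s; rewrite !(entD, entZ); ring.
Qed.


Lemma UT_mul (a b : MX) : isUT a -> isUT b -> isUT (a * b).
Proof.
move=> [al ad] [bl bd]; split.
  move=> p q qp; rewrite -mulmxE mxE big1 // => t _.
  case: (ltnP t p) => tp; first by rewrite al // mul0r.
  by rewrite bl ?mulr0 //; apply: leq_trans qp tp.
move=> p; rewrite -mulmxE mxE (bigD1 p) //= ad bd mulr1 big1 ?addr0 // => t tp.
case: (ltnP t p) => tp'; first by rewrite al // mul0r.
rewrite bl ?mulr0 //; rewrite ltn_neqAle tp' andbT; by move: tp; rewrite -val_eqE eq_sym.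
Qed.

Lemma UT_unit (y : MX) : isUT y -> y \is a GRing.unit.
Proof.
move=> [yl yd]; rewrite -[_ \is a _]/(y \in unitmx) unitmxE -det_tr det_trig.
  by rewrite big1 ?unitr1 // => i _; rewrite mxE yd.
by apply/is_trig_mxP => i j ij; rewrite mxE yl.
Qed.

Lemma entT p q c r s : T p q c r s = (r == s)%:R + c * ((r == p) && (s == q))%:R.
Proof. by rewrite /T entD ent1 entZ entE. Qed.

Lemma UT_T (p q : 'I_n) c : (p < q)%N -> isUT (T p q c).
Proof.
move=> pq; split => [r s sr|r]; rewrite entT.
  have -> : (r == s) = false by apply/negbTE; move: sr; rewrite -val_eqE /=; lia.
  have [rp|] := eqVneq r p; last by rewrite mulr0 addr0.
  have [sq|] := eqVneq s q; last by rewrite andbF mulr0 addr0.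
  by move: sr pq; rewrite rp sq; lia.
have [rp|] := eqVneq r p; last by rewrite eqxx mulr0 addr0.
have [rq|] := eqVneq r q; last by rewrite eqxx andbF mulr0 addr0.
by move: pq; rewrite -rp -rq ltnn.
Qed.

Lemma UT1 : isUT (1 : MX).
Proof. by split => [r s sr|r]; rewrite ent1 ?eqxx //; have -> : (r == s) = false by apply/negbTE; move: sr; rewrite -val_eqE /=; lia. Qed.

Lemma T0 p q : T p q 0 = 1.
Proof. by rewrite /T scale0r addr0. Qed.

Lemma unitN a b c : (1 + N a b c) \is a GRing.unit.
Proof.
apply/unitrP; exists (1 - N a b c); split.
  by rewrite mulrDr mulr1 mulrBl mul1r NN subr0 subrK.
by rewrite mulrBr mulr1 mulrDl mul1r NN addr0 addrK.
Qed.

Definition Sy (y : MX) := [set pq : 'I_n * 'I_n | (pq.1 < pq.2)%N && (y pq.1 pq.2 != 0)].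

Lemma UT_S0 (y : MX) : isUT y -> Sy y = set0 -> y = 1.
Proof.
move=> [yl yd] S0; apply/matrixP => r s; rewrite ent1.
case: (ltngtP r s) => [rs|sr|rs].
- have : (r, s) \notin Sy y by rewrite S0 inE.
  rewrite inE /= rs /= negbK => /eqP ->.
  by have -> : (r == s) = false by apply/negbTE; move: rs; rewrite -val_eqE /=; lia.
- rewrite yl //.
  by have -> : (r == s) = false by apply/negbTE; move: sr; rewrite -val_eqE /=; lia.
- have -> : r = s by apply: val_inj.
  by rewrite yd eqxx.
Qed.

Lemma peel (f : MX -> F) (p0 q0 : 'I_n) :
  (forall a (i j : 'I_n) c, isUT a -> (i < j)%N -> ~~ ((i == p0) && (j == q0)) ->
     f (a * T i j c) = f a) ->
  forall y, isUT y -> y p0 q0 = 0 -> forall a, isUT a -> f (a * y) = f a.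
Proof.
move=> Hf.
suff H : forall K y, (#|Sy y| <= K)%N -> isUT y -> y p0 q0 = 0 ->
    forall a, isUT a -> f (a * y) = f a.
  by move=> y; apply: H (leqnn _).
elim=> [|K IH] y.
  rewrite leqn0 cards_eq0 => /eqP S0 Hy _ a Ha.
  by rewrite (UT_S0 Hy S0) mulr1.
move=> HK Hy Hy0 a Ha.
case: (set_0Vmem (Sy y)) => [S0 | [pq0 Hpq0]].
  by rewrite (UT_S0 Hy S0) mulr1.
case: (arg_minnP (fun pq : 'I_n * 'I_n => nat_of_ord pq.1) Hpq0) => [[i j] Hij Hmin].
have {}Hij : (i, j) \in Sy y := Hij.
move: (Hij); rewrite inE /= => /andP [ij yij].
have [yl yd] := Hy.
have coli r : y r i = (r == i)%:R.
  have [->|] := eqVneq r i; first by rewrite yd.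
  rewrite -val_eqE /= neq_ltn => /orP [ri|ir]; last by rewrite yl.
  apply/eqP; apply: contraT => nz.
  have : (r, i) \in Sy y by rewrite inE /= ri.
  by move/Hmin => /=; rewrite leqNgt ri.
pose c := y i j.
pose y' := y - c *: E i j.
have ji : (j == i) = false by apply/negbTE; move: ij; rewrite -val_eqE /=; lia.
have yE : y' * T i j c = y.
  rewrite /T mulrDr mulr1 -scalerAr /y' mulrBl -scalerAl EE ji scale0r scaler0 subr0.
  have -> : y * E i j = E i j.
    by apply/matrixP => r s; rewrite mulE coli entE; case: (r == i); case: (s == j); rewrite /= ?mulr1 ?mulr0.
  by rewrite subrK.
have y'E r s : y' r s = y r s - c * ((r == i) && (s == j))%:R by rewrite entB entZ entE.
have Hy' : isUT y'.
  split => [r s sr|r]; rewrite y'E.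
    rewrite yl //; case: (eqVneq r i) => [ri|]; last by rewrite /= mulr0 subr0.
    case: (eqVneq s j) => [sj|]; last by rewrite andbF mulr0 subr0.
    by move: sr ij; rewrite ri sj; lia.
  rewrite yd; case: (eqVneq r i) => [ri|]; last by rewrite /= mulr0 subr0.
  by rewrite ri (eq_sym i j) ji mulr0 subr0.
have ne : ~~ ((i == p0) && (j == q0)).
  by apply/negP => /andP [/eqP ip /eqP jq]; move: yij; rewrite ip jq Hy0 eqxx.
have Hy'0 : y' p0 q0 = 0.
  rewrite y'E Hy0 (eq_sym p0) (eq_sym q0) (negbTE ne) mulr0 subr0 //.
have Hcard : (#|Sy y'| <= K)%N.
  have sub : Sy y' \subset Sy y :\ (i, j).
    apply/subsetP => [[r s]]; rewrite !inE /= y'E => /andP [rs nz].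
    have nij : ~~ ((r == i) && (s == j)).
      by apply/negP => /andP [/eqP ri /eqP sj]; move: nz; rewrite ri sj !eqxx /= /c mulr1 subrr eqxx.
    move: nz; rewrite (negbTE nij) mulr0 subr0 => nz.
    rewrite rs nz /= andbT; apply/negP => /eqP [ri sj]; move: nij; by rewrite ri sj !eqxx.
  move: HK; rewrite (cardsD1 (i, j)) Hij add1n ltnS => HK.
  exact: leq_trans (subset_leq_card sub) HK.
rewrite -yE mulrA Hf //; first exact: IH.
exact: UT_mul.
Qed.

Section Main.
Variables (phi : MX -> MX) (g h k : MX -> F).
Hypothesis Hphi : forall b, isUT b -> phi b = b * (1 + N (g b) (h b) (k b)).
Hypothesis Hcomm : forall x y, isUT x -> isUT y ->
  phi (x * y * x^-1 * y^-1) = phi x * phi y * (phi x)^-1 * (phi y)^-1.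
Hypothesis Hfix : forall (p q : 'I_n) c, (p < q)%N -> phi (T p q c) = T p q c.

Lemma Rrule a b : isUT a -> isUT b ->
  b i0 i1 * (g b - g (a * b) + g a) = b iM iL * (h b - h (a * b) + h a).
Proof.
move=> Ha Hb; have Hab := UT_mul Ha Hb.
have ua := UT_unit Ha; have ub := UT_unit Hb.
have uPhi x : isUT x -> phi x \is a GRing.unit.
  by move=> Hx; rewrite Hphi // unitrMl ?unitN // UT_unit.
have uA := uPhi _ Ha; have uB := uPhi _ Hb; have uC := uPhi _ Hab.
have key : a * b * b * (a * b)^-1 * b^-1 = a * b * a^-1 * b^-1.
  by rewrite invrM // !mulrA mulrK.
have E1 : phi (a * b) * phi b * (phi (a * b))^-1 * (phi b)^-1 =
          phi a * phi b * (phi a)^-1 * (phi b)^-1.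
  by rewrite -!Hcomm // key.
have E2 : phi (a * b) * phi b * (phi (a * b))^-1 = phi a * phi b * (phi a)^-1.
  have uBV : (phi b)^-1 \is a GRing.unit by rewrite unitrV.
  exact: (mulIr uBV E1).
pose W := b + (b * N (g (a * b)) (h (a * b)) (k (a * b)) - N (g a) (h a) (k a) * b).
have AW : phi a * W = phi (a * b).
  rewrite !Hphi // -!mulrA; congr (a * _); rewrite /W !UT_mulN // !UT_Nmul //.
  rewrite !(mulrDl, mulrDr, mulrBr, mul1r, mulr1) ?mulrN !NN ?oppr0 (UT_Nmul _ _ _ Hb) (UT_mulN _ _ _ Hb).
  apply/matrixP => r s; rewrite !(entD, entB, entZ, entO, ent0) !NE /N_def !(entD, entB, entZ); ring.
have uW : W \is a GRing.unit.
  have -> : W = (phi a)^-1 * phi (a * b) by rewrite -AW mulKr.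
  by rewrite unitrMr // unitrV.
have E3 : W * phi b = phi b * W.
  have uAV : (phi a)^-1 \is a GRing.unit by rewrite unitrV.
  move: E2; rewrite -AW invrM // !mulrA => /(mulIr uAV).
  rewrite -!mulrA => /(mulrI uA); rewrite mulrA => E4.
  by rewrite -[in RHS]E4 divrK.
move: E3; rewrite (Hphi Hb) /W (UT_mulN _ _ _ Hb) (UT_Nmul _ _ _ Hb).
rewrite [b * (1 + _)]mulrDr mulr1 (UT_mulN _ _ _ Hb).
rewrite !(mulrDl, mulrDr) ?mulNr ?mulrN !NN ?oppr0 !(UT_mulN _ _ _ Hb) !(UT_Nmul _ _ _ Hb).
move=> /matrixP /(_ i0 iL).
rewrite !(entD, entB, entZ, entO, ent0) !N0L => /eqP; rewrite -subr_eq0 => /eqP E5.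
apply/eqP; rewrite -subr_eq0; apply/eqP; rewrite -[X in _ = X]E5; ring.
Qed.


Lemma fixT (p q : 'I_n) c : (p < q)%N -> g (T p q c) = 0 /\ h (T p q c) = 0.
Proof.
move=> pq; have HT := UT_T c pq; have := Hphi HT; rewrite Hfix // mulrDr mulr1.
move=> H0.
have H : T p q c * N (g (T p q c)) (h (T p q c)) (k (T p q c)) = 0.
  by apply: (@addrI _ (T p q c)); rewrite addr0 -H0.
have HN : N (g (T p q c)) (h (T p q c)) (k (T p q c)) = 0.
  by rewrite -[LHS](mulKr (UT_unit HT)) H mulr0.
by split; [rewrite -(N1L (g (T p q c)) (h (T p q c)) (k (T p q c))) HN ent0 | rewrite -(N0M (g (T p q c)) (h (T p q c)) (k (T p q c))) HN ent0].
Qed.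

Lemma TT (p q : 'I_n) c (p' q' : 'I_n) c' : T p q c * T p' q' c' =
  1 + c *: E p q + c' *: E p' q' + (c * c' * (q == p')%:R) *: E p q'.
Proof.
rewrite /T mulrDl mul1r !mulrDr mulr1 -scalerAl -scalerAr EE !scalerA.
by apply/matrixP => r s; rewrite !(entD, entZ); ring.
Qed.

Lemma gInv a (p q : 'I_n) c : isUT a -> (p < q)%N -> ~~ ((p == iM) && (q == iL)) ->
  g (a * T p q c) = g a.
Proof.
move=> Ha pq hpq; have HT := UT_T c pq; have HaT := UT_mul Ha HT.
have [/andP [ep eq]|ne] := boolP ((p == i0) && (q == i1)).
  move/eqP: ep => ep; move/eqP: eq => eq; subst p q.
  have [->|c0] := eqVneq c 0; first by rewrite T0 mulr1.
  have := Rrule Ha HT; rewrite !entT !eqxx !neq /= (proj1 (fixT c pq)).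
  rewrite mulr1 add0r mulr0 addr0 mul0r => /eqP; rewrite mulf_eq0 (negbTE c0) /=.
  by rewrite add0r addrC subr_eq0 => /eqP.
have H01 : (i0 < i1)%N by [].
have HT1 := UT_T 1 H01.
have R1 := Rrule HaT HT1; rewrite !entT !eqxx !neq /= (proj1 (fixT 1 H01)) in R1.
move: R1; rewrite ?(mulr1, mul1r, mulr0, mul0r, add0r, addr0, sub0r, subr0) addrC => /eqP; rewrite subr_eq0 => /eqP R1.
have R2 := Rrule HT HT1; rewrite !entT !eqxx !neq /= (proj1 (fixT 1 H01)) (proj1 (fixT c pq)) in R2.
move: R2; rewrite ?(mulr1, mul1r, mulr0, mul0r, add0r, addr0, sub0r, subr0) => /eqP; rewrite oppr_eq0 => /eqP R2.
have HU := UT_mul HT HT1.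
have qi0 : (q == i0) = false by apply/negbTE; move: pq; rewrite -val_eqE /=; lia.
have U01 : (T p q c * T i0 i1 1) i0 i1 = 1.
  rewrite TT !(entD, entZ, ent1, entE) ?eqxx ?neq ?qi0 /= (eq_sym i0 p) (eq_sym i1 q).
  by rewrite (negbTE ne) ?(mulr1, mul1r, mulr0, mul0r, add0r, addr0, sub0r, subr0).
have UML : (T p q c * T i0 i1 1) iM iL = 0.
  rewrite TT !(entD, entZ, ent1, entE) ?eqxx ?neq ?qi0 /= (eq_sym iM p) (eq_sym iL q).
  by rewrite (negbTE hpq) ?(mulr1, mul1r, mulr0, mul0r, add0r, addr0, sub0r, subr0).
have R3 := Rrule Ha HU; move: R3; rewrite U01 UML R2 ?(mulr1, mul1r, mulr0, mul0r, add0r, addr0, sub0r, subr0).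
move=> /eqP; rewrite addrC subr_eq0 => /eqP R3.
by rewrite R1 -mulrA R3.
Qed.

Lemma hInv a (p q : 'I_n) c : isUT a -> (p < q)%N -> ~~ ((p == i0) && (q == i1)) ->
  h (a * T p q c) = h a.
Proof.
move=> Ha pq hpq; have HT := UT_T c pq; have HaT := UT_mul Ha HT.
have HML : (iM < iL)%N by rewrite /=.
have [/andP [ep eq]|ne] := boolP ((p == iM) && (q == iL)).
  move/eqP: ep => ep; move/eqP: eq => eq; subst p q.
  have [->|c0] := eqVneq c 0; first by rewrite T0 mulr1.
  have := Rrule Ha HT; rewrite !entT ?eqxx ?neq /= (proj2 (fixT c pq)) ?(mulr1, mul1r, mulr0, mul0r, add0r, addr0, sub0r, subr0).
  move=> /esym /eqP; rewrite mulf_eq0 (negbTE c0) /= addrC subr_eq0 => /eqP.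
  by [].
have HT1 := UT_T 1 HML.
have R1 := Rrule HaT HT1; rewrite !entT ?eqxx ?neq /= (proj2 (fixT 1 HML)) in R1.
move: R1; rewrite ?(mulr1, mul1r, mulr0, mul0r, add0r, addr0, sub0r, subr0) => /esym /eqP; rewrite addrC subr_eq0 => /eqP R1.
have R2 := Rrule HT HT1; rewrite !entT ?eqxx ?neq /= (proj2 (fixT 1 HML)) (proj2 (fixT c pq)) in R2.
move: R2; rewrite ?(mulr1, mul1r, mulr0, mul0r, add0r, addr0, sub0r, subr0) => /esym /eqP; rewrite oppr_eq0 => /eqP R2.
have HU := UT_mul HT HT1.
have pq' : ((iM == p) && (q == iM)) = false.
  by apply/negbTE; apply/negP => /andP [/eqP ep /eqP eq]; move: pq; rewrite -ep eq ltnn.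
have U01 : (T p q c * T iM iL 1) i0 i1 = 0.
  rewrite TT !(entD, entZ, ent1, entE) ?eqxx ?neq /= (eq_sym i0 p) (eq_sym i1 q).
  by rewrite (negbTE hpq) ?(mulr1, mul1r, mulr0, mul0r, add0r, addr0, sub0r, subr0) andbF ?(mulr1, mul1r, mulr0, mul0r, add0r, addr0, sub0r, subr0).
have UML : (T p q c * T iM iL 1) iM iL = 1.
  rewrite TT !(entD, entZ, ent1, entE) ?eqxx ?neq /= (eq_sym iM p) (eq_sym iL q).
  rewrite (negbTE ne) andbT; case: (eqVneq q iM) => [qe|_]; last by rewrite ?(mulr1, mul1r, mulr0, mul0r, add0r, addr0, sub0r, subr0).
  have -> : (p == iM) = false by apply/negbTE; apply/eqP => pe; move: pq; rewrite pe qe ltnn.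
  by rewrite ?(mulr1, mul1r, mulr0, mul0r, add0r, addr0, sub0r, subr0).
have R3 := Rrule Ha HU; move: R3; rewrite U01 UML R2 ?(mulr1, mul1r, mulr0, mul0r, add0r, addr0, sub0r, subr0).
move=> /esym /eqP; rewrite addrC subr_eq0 => /eqP R3.
by rewrite R1 -mulrA R3.
Qed.

End Main.

Lemma tmxT (i j : 'I_n) a : tmx n i.+1 j.+1 a = T i j a.
Proof.
apply/matrixP => r s; rewrite entT mxE !eqSS !val_eqE.
by case: ((r == i) && (s == j)); rewrite ?mulr1 ?mulr0.
Qed.

Lemma T3 a b c : T i1 iL a * T i0 iM b * T i0 iL c = 1 + N a b c.
Proof.
rewrite /T !(mulrDl, mulrDr, mul1r, mulr1) -!scalerAl -!scalerAr !EE !neq !scale0r !scaler0 !addr0.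
by rewrite !NE /N_def; apply/matrixP => r s; rewrite ?mul0r !(entD, entZ, ent0); ring.
Qed.

Lemma Tinv (p q : 'I_n) c : (p < q)%N -> T p q c * T p q (- c) = 1.
Proof.
move=> pq; rewrite TT.
have -> : (q == p) = false by apply/negbTE; move: pq; rewrite -val_eqE /=; lia.
by rewrite mulr0 scale0r addr0 scaleNr addrK.
Qed.

Lemma final (phi : MX -> MX) (g h k : MX -> F) :
  (forall b, isUT b -> phi b = b * (1 + N (g b) (h b) (k b))) ->
  (forall x y, isUT x -> isUT y ->
     phi (x * y * x^-1 * y^-1) = phi x * phi y * (phi x)^-1 * (phi y)^-1) ->
  (forall (p q : 'I_n) c, (p < q)%N -> phi (T p q c) = T p q c) ->
  forall b, isUT b -> g b = 0 /\ h b = 0.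
Proof.
move=> Hphi Hcomm Hfix b Hb; split.
  have HML : (iM < iL)%N by rewrite /=.
  pose v := b iM iL.
  have Hy : isUT (T iM iL (- v) * b) by apply: UT_mul => //; apply: UT_T.
  have Hy0 : (T iM iL (- v) * b) iM iL = 0.
    by rewrite /T mulrDl mul1r -scalerAl entD entZ Emul eqxx mul1r (rowL _ Hb) eqxx /v /= mulr1 addrN.
  have -> : b = T iM iL v * (T iM iL (- v) * b) by rewrite mulrA Tinv // mul1r.
  rewrite (peel (gInv Hphi Hcomm Hfix) Hy Hy0 (UT_T v HML)).
  exact: (proj1 (fixT Hphi Hfix v HML)).
have H01 : (i0 < i1)%N by [].
pose v := b i0 i1.
have Hy : isUT (T i0 i1 (- v) * b) by apply: UT_mul => //; apply: UT_T.
have Hy0 : (T i0 i1 (- v) * b) i0 i1 = 0.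
  by rewrite /T mulrDl mul1r -scalerAl entD entZ Emul eqxx mul1r (proj2 Hb) /v; ring.
have -> : b = T i0 i1 v * (T i0 i1 (- v) * b) by rewrite mulrA Tinv // mul1r.
rewrite (peel (hInv Hphi Hcomm Hfix) Hy Hy0 (UT_T v H01)).
exact: (proj2 (fixT Hphi Hfix v H01)).
Qed.

End S.

Theorem mainTheorem11 (F : fieldType) (n : nat) (hn : (4 <= n)%N)
  (phi : 'M[F]_n -> 'M[F]_n) (g h k : 'M[F]_n -> F) :
  PCmap phi -> almost_identity phi ->
  (forall b, isUT b ->
     phi b = b *m tmx n 2 n (g b) *m tmx n 1 n.-1 (h b) *m tmx n 1 n (k b)) ->
  exists alpha beta : F, forall b, isUT b ->
     g b = alpha * entry b 2 3 /\ h b = beta * entry b n.-2 n.-1.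
Proof.
have [m Em] : exists m, n = m.+4 by exists (n - 4)%N; lia.
subst n => -[HUT Hinj Hsurj Hcomm0] Hai Hform.
exists 0, 0 => b Hb; rewrite !mul0r.
have Hphi : forall b, isUT b -> phi b = b * (1 + @N F m (g b) (h b) (k b)).
  move=> c Hc; rewrite Hform // -T3 !mulrA.
  by rewrite -(tmxT (i1 m) (iL m)) -(tmxT (i0 m) (iM m)) -(tmxT (i0 m) (iL m)).
have Hcomm : forall x y, isUT x -> isUT y ->
     phi (x * y * x^-1 * y^-1) = phi x * phi y * (phi x)^-1 * (phi y)^-1.
  by move=> x y Hx Hy; exact: (Hcomm0 x y Hx Hy).
have Hfix : forall (p q : 'I_m.+4) c, (p < q)%N -> phi (@T F m p q c) = T p q c.
  by move=> p q c pq; rewrite -tmxT; apply: Hai.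
exact: (final Hphi Hcomm Hfix Hb).
Qed.
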